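(* Let $k$ be an algebraically closed field, let $1\le s\le t$ be integers, $R=k[x,y]/(x^s,y^t)$ with its standard grading, and $\theta$ the image of $x+y$ in $R$. Let $\kappa$ be a nonzero homogeneous element of $R$ and put $d=\sigma(k[\theta]\kappa)$. If $t-1\le d<s+t-2$, then $$\sum_{i=0}^{s+t-2-d}k[\theta]\kappa x^i=\bigoplus_{i=0}^{s+t-2-d}k[\theta]\kappa x^i,$$ i.e. this sum of $k[\theta]$-submodules of $R$ is direct.
   Context: $R=\bigoplus_i R_i$ where $R_i$ is spanned by the images of monomials of degree $i$. For a nonzero homogeneous element $\kappa\in R_m$, the socle degree $\sigma(k[\theta]\kappa)$ is the integer $d$ such that the socle of the $k[\theta]$-module $k[\theta]\kappa$ is contained in $R_d$; equivalently $d=m+e$ where $e$ is the largest integer with $\theta^e\kappa\neq0$. *)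

(* Defs.v *)
From HB Require Import structures.
From mathcomp Require Import all_boot all_order all_algebra.
Set Implicit Arguments. Unset Strict Implicit. Unset Printing Implicit Defensive.
Import GRing.Theory.
Local Open Scope ring_scope.

(* The ring R = k[x,y]/(x^s,y^t), represented in its standard monomial basis
   {x^a y^b : a < s, b < t}: an element is the matrix of its coefficients,
   entry (a,b) being the coefficient of x^a y^b. *)
Definition Rq (k : fieldType) (s t : nat) := 'M[k]_(s, t).

Definition mulR (k : fieldType) (s t : nat) (A B : 'M[k]_(s, t)) : 'M[k]_(s, t) :=
  \matrix_(i < s, j < t)
    \sum_(i1 < s) \sum_(j1 < t) \sum_(i2 < s) \sum_(j2 < t)
      (if ((i1 + i2)%N == i) && ((j1 + j2)%N == j) then A i1 j1 * B i2 j2 else 0).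

(* the image of the monomial x^a y^b in R (zero if a >= s or b >= t) *)
Definition monoR (k : fieldType) (s t : nat) (a b : nat) : 'M[k]_(s, t) :=
  \matrix_(i < s, j < t) (if ((i : nat) == a) && ((j : nat) == b) then 1 else 0).

Definition oneR (k : fieldType) (s t : nat) : 'M[k]_(s, t) := monoR k s t 0 0.
Definition xR (k : fieldType) (s t : nat) : 'M[k]_(s, t) := monoR k s t 1 0.
Definition yR (k : fieldType) (s t : nat) : 'M[k]_(s, t) := monoR k s t 0 1.
Definition thetaR (k : fieldType) (s t : nat) : 'M[k]_(s, t) := xR k s t + yR k s t.

Definition powR (k : fieldType) (s t : nat) (A : 'M[k]_(s, t)) (n : nat) : 'M[k]_(s, t) :=
  iter n (mulR A) (oneR k s t).

Definition homogR (k : fieldType) (s t : nat) (m : nat) (A : 'M[k]_(s, t)) : Prop :=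
  forall (i : 'I_s) (j : 'I_t), A i j != 0 -> (i + j)%N = m.

(* sigma(k[theta] kappa) = d for a nonzero homogeneous kappa in R_m:
   d = m + e, e the largest integer with theta^e kappa <> 0 *)
Definition socle_degree (k : fieldType) (s t : nat) (kappa : 'M[k]_(s, t)) (d : nat) : Prop :=
  exists m e : nat,
    [/\ homogR m kappa,
        mulR (powR (thetaR k s t) e) kappa != 0,
        (forall e' : nat, (e < e')%N -> mulR (powR (thetaR k s t) e') kappa = 0)
      & d = (m + e)%N].

Definition thetaPolyElt (k : fieldType) (s t : nat) (p : {poly k})
    (kappa : 'M[k]_(s, t)) (i : nat) : 'M[k]_(s, t) :=
  \sum_(e < size p) p`_e *: mulR (mulR (powR (thetaR k s t) e) kappa) (powR (xR k s t) i).

Definition direct_theta_sum (k : fieldType) (s t : nat) (kappa : 'M[k]_(s, t)) (n : nat) : Prop :=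
  forall p : nat -> {poly k},
    \sum_(i < n.+1) thetaPolyElt (p i) kappa i = 0 ->
    forall i : nat, (i <= n)%N -> thetaPolyElt (p i) kappa i = 0.

(* Main.v *)
From HB Require Import structures.
Require Import Defs.
From mathcomp Require Import all_boot all_order all_algebra.
From mathcomp Require Import zify.
Set Implicit Arguments. Unset Strict Implicit. Unset Printing Implicit Defensive.
Import GRing.Theory.
Local Open Scope ring_scope.



Definition cf (k : fieldType) (s t : nat) (A : 'M[k]_(s, t)) (a b : nat) : k :=
  match (insub a : option 'I_s), (insub b : option 'I_t) with
  | Some i, Some j => A i j | _, _ => 0 end.

Lemma cfE (k : fieldType) (s t : nat) (A : 'M[k]_(s, t)) (i : 'I_s) (j : 'I_t) :
  cf A i j = A i j.
Proof. by rewrite /cf !valK. Qed.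

Lemma cf_out (k : fieldType) (s t : nat) (A : 'M[k]_(s, t)) a b :
  ~~ ((a < s) && (b < t))%N -> cf A a b = 0.
Proof.
rewrite negb_and /cf => /orP [h|h]; first by rewrite insubN.
by case: (insub a) => // i; rewrite insubN.
Qed.

Definition phiP (k : fieldType) (s t : nat) (A : 'M[k]_(s, t)) : {poly {poly k}} :=
  \poly_(a < s) \poly_(b < t) cf A a b.
Definition psiP (k : fieldType) (s t : nat) (P : {poly {poly k}}) : 'M[k]_(s, t) :=
  \matrix_(i < s, j < t) P`_i`_j.

Lemma coef_phiP (k : fieldType) (s t : nat) (A : 'M[k]_(s, t)) a b :
  (phiP A)`_a`_b = cf A a b.
Proof.
rewrite /phiP coef_poly; case: ifP => ha; last first.
  by rewrite coef0 cf_out // ha.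
rewrite coef_poly; case: ifP => hb //.
by rewrite cf_out // ha hb.
Qed.

Lemma psiK (k : fieldType) (s t : nat) (A : 'M[k]_(s, t)) : psiP s t (phiP A) = A.
Proof. by apply/matrixP => i j; rewrite mxE coef_phiP cfE. Qed.

Lemma coef2M (k : fieldType) (P Q : {poly {poly k}}) i j :
  (P * Q)`_i`_j = \sum_(l < i.+1) \sum_(l2 < j.+1) P`_l`_l2 * Q`_(i - l)`_(j - l2).
Proof.
rewrite coefM coef_sum; apply: eq_bigr => l _; by rewrite coefM.
Qed.

Lemma sum_delta (V : nmodType) (n a : nat) (F : nat -> V) :
  \sum_(l < n) (if (l : nat) == a then F l else 0) = if (a < n)%N then F a else 0.
Proof.
elim: n => [|n IH]; first by rewrite big_ord0.
rewrite big_ord_recr /= IH ltnS.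
by case: (ltngtP a n) => h; rewrite ?addr0 ?add0r // h.
Qed.

Lemma sum_trunc (V : nmodType) (a N : nat) (F : nat -> V) :
  (a <= N)%N -> (forall j, (a <= j)%N -> F j = 0) ->
  \sum_(j < N) F j = \sum_(j < a) F j.
Proof.
move=> aN h; rewrite -!(big_mkord xpredT F) (@big_cat_nat _ _ _ a 0 N _ _ (leq0n a) aN) /=.
rewrite [X in _ + X]big1_seq ?addr0 // => j /andP [_]; rewrite mem_index_iota => /andP [].
by move=> /h.
Qed.

Lemma mulR_psi (k : fieldType) (s t : nat) (A B : 'M[k]_(s, t)) :
  mulR A B = psiP s t (phiP A * phiP B).
Proof.
apply/matrixP => i j; rewrite !mxE coef2M.
have E : forall (i1 : 'I_s) (j1 : 'I_t),
  \sum_(i2 < s) \sum_(j2 < t)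
     (if ((i1 + i2)%N == i) && ((j1 + j2)%N == j) then A i1 j1 * B i2 j2 else 0)
  = if (i1 <= i)%N && (j1 <= j)%N then cf A i1 j1 * cf B (i - i1)%N (j - j1)%N else 0.
  move=> i1 j1.
  transitivity (\sum_(i2 < s) (if i2 == (i - i1)%N :> nat then
     (if (i1 <= i)%N then \sum_(j2 < t) (if j2 == (j - j1)%N :> nat then
        (if (j1 <= j)%N then cf A i1 j1 * cf B i2 j2 else 0) else 0) else 0) else 0)).
    apply: eq_bigr => i2 _.
    have -> : ((i1 + i2)%N == i) = (i2 == (i - i1)%N :> nat) && (i1 <= i)%N.
      apply/idP/idP; first by move/eqP => <-; rewrite addKn eqxx leq_addr.
      by case/andP => /eqP -> h; rewrite subnKC.
    case: (i2 == (i - i1)%N :> nat); case: (i1 <= i)%N => /=; try by rewrite big1.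
    apply: eq_bigr => j2 _.
    have -> : ((j1 + j2)%N == j) = (j2 == (j - j1)%N :> nat) && (j1 <= j)%N.
      apply/idP/idP; first by move/eqP => <-; rewrite addKn eqxx leq_addr.
      by case/andP => /eqP -> h; rewrite subnKC.
    case: (j2 == (j - j1)%N :> nat); case: (j1 <= j)%N => //=.
    by rewrite !cfE.
  rewrite (sum_delta _ _ (fun i2 : nat => if (i1 <= i)%N then \sum_(j2 < t)
    (if (j2:nat) == (j - j1)%N then if (j1 <= j)%N then cf A i1 j1 * cf B i2 j2 else 0 else 0) else 0)).
  rewrite (sum_delta _ _ (fun j2 : nat => if (j1 <= j)%N then cf A i1 j1 * cf B (i - i1)%N j2 else 0)).
  have -> : ((i - i1) < s)%N by apply: leq_ltn_trans (leq_subr _ _) (ltn_ord i).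
  have -> : ((j - j1) < t)%N by apply: leq_ltn_trans (leq_subr _ _) (ltn_ord j).
  by case: (i1 <= i)%N; case: (j1 <= j)%N.
transitivity (\sum_(l < s) \sum_(l2 < t) (if (l <= i)%N && (l2 <= j)%N
   then cf A l l2 * cf B (i - l)%N (j - l2)%N else 0)).
  by apply eq_bigr => l _; apply eq_bigr => l2 _; rewrite E.
rewrite (sum_trunc (a := i.+1) (F := fun l : nat => \sum_(l2 < t) (if (l <= i)%N && (l2 <= j)%N
   then cf A l l2 * cf B (i - l)%N (j - l2)%N else 0))) //; last first.
  by move=> l hl; apply big1 => l2 _; rewrite leqNgt hl.
apply eq_bigr => l _.
rewrite (sum_trunc (a := j.+1) (F := fun l2 : nat => (if (l <= i)%N && (l2 <= j)%N
   then cf A l l2 * cf B (i - l)%N (j - l2)%N else 0))) //; last first.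
  by move=> l2 hl; rewrite [(l2 <= j)%N]leqNgt hl andbF.
apply eq_bigr => l2 _; rewrite !coef_phiP.
by have := ltn_ord l; have := ltn_ord l2; rewrite !ltnS => -> ->.
Qed.



Lemma insubO s a (ha : (a < s)%N) : (insub a : option 'I_s) = Some (Ordinal ha).
Proof. by rewrite insubT. Qed.

Lemma cf_psi (k : fieldType) (s t : nat) (X : {poly {poly k}}) a b :
  (a < s)%N -> (b < t)%N -> cf (psiP s t X) a b = X`_a`_b.
Proof. by move=> ha hb; rewrite /cf (insubO ha) (insubO hb) mxE. Qed.

Lemma cf_mono (k : fieldType) (s t : nat) a0 b0 a b :
  (a < s)%N -> (b < t)%N ->
  cf (monoR k s t a0 b0) a b = if (a == a0) && (b == b0) then 1 else 0.
Proof. by move=> ha hb; rewrite /cf (insubO ha) (insubO hb) mxE. Qed.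

Lemma cfD (k : fieldType) (s t : nat) (A B : 'M[k]_(s, t)) a b :
  cf (A + B) a b = cf A a b + cf B a b.
Proof.
rewrite /cf; case: (insub a) => [i|]; last by rewrite addr0.
by case: (insub b) => [j|]; rewrite ?mxE ?addr0.
Qed.

Lemma cfZ (k : fieldType) (s t : nat) (c : k) (A : 'M[k]_(s, t)) a b :
  cf (c *: A) a b = c * cf A a b.
Proof.
rewrite /cf; case: (insub a) => [i|]; last by rewrite mulr0.
by case: (insub b) => [j|]; rewrite ?mxE ?mulr0.
Qed.

Lemma phiD (k : fieldType) (s t : nat) (A B : 'M[k]_(s, t)) :
  phiP (A + B) = phiP A + phiP B.
Proof.
by apply/polyP => a; apply/polyP => b; rewrite !coefD !coef_phiP cfD.
Qed.

Lemma psiD (k : fieldType) (s t : nat) (P Q : {poly {poly k}}) :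
  psiP s t (P + Q) = psiP s t P + psiP s t Q.
Proof. by apply/matrixP => i j; rewrite !mxE !coefD. Qed.

Lemma psi_trunc (k : fieldType) (s t : nat) (X Y : {poly {poly k}}) :
  psiP s t (phiP (psiP s t X) * Y) = psiP s t (X * Y).
Proof.
apply/matrixP => i j; rewrite !mxE !coef2M.
apply eq_bigr => l _; apply eq_bigr => l2 _; rewrite coef_phiP cf_psi //.
  by apply: leq_ltn_trans (ltn_ord i); rewrite -ltnS.
by apply: leq_ltn_trans (ltn_ord j); rewrite -ltnS.
Qed.

Lemma mulRC (k : fieldType) (s t : nat) (A B : 'M[k]_(s, t)) : mulR A B = mulR B A.
Proof. by rewrite !mulR_psi mulrC. Qed.

Lemma mulRA (k : fieldType) (s t : nat) (A B C : 'M[k]_(s, t)) :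
  mulR A (mulR B C) = mulR (mulR A B) C.
Proof.
rewrite !mulR_psi psi_trunc mulrC psi_trunc.
by rewrite mulrC mulrA.
Qed.

Lemma mulRDl (k : fieldType) (s t : nat) (A B C : 'M[k]_(s, t)) :
  mulR (A + B) C = mulR A C + mulR B C.
Proof. by rewrite !mulR_psi phiD mulrDl psiD. Qed.

Lemma mul1R (k : fieldType) (s t : nat) (A : 'M[k]_(s, t)) : mulR (oneR k s t) A = A.
Proof.
apply/matrixP => i j; rewrite mulR_psi mxE coef2M.
transitivity (\sum_(l < i.+1) (if (l : nat) == 0%N then
   \sum_(l2 < j.+1) (if (l2 : nat) == 0%N then cf A (i - l)%N (j - l2)%N else 0) else 0)).
  apply eq_bigr => l _.
  have hl : (l < s)%N by apply: leq_ltn_trans (ltn_ord i); rewrite -ltnS.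
  case: eqP => hl0.
    apply eq_bigr => l2 _.
    have hl2 : (l2 < t)%N by apply: leq_ltn_trans (ltn_ord j); rewrite -ltnS.
    by rewrite !coef_phiP cf_mono // hl0 eqxx /=; case: eqP; rewrite ?mul1r ?mul0r.
  rewrite big1 // => l2 _.
  have hl2 : (l2 < t)%N by apply: leq_ltn_trans (ltn_ord j); rewrite -ltnS.
  by rewrite !coef_phiP cf_mono //; move/eqP/negbTE: hl0 => ->; rewrite mul0r.
rewrite (sum_delta _ _ (fun l : nat => \sum_(l2 < j.+1)
   (if (l2 : nat) == 0%N then cf A (i - l)%N (j - l2)%N else 0))) /=.
by rewrite (sum_delta _ _ (fun l2 : nat => cf A (i - 0)%N (j - l2)%N)) /= !subn0 cfE.
Qed.

Lemma mulRZ (k : fieldType) (s t : nat) (c : k) (A B : 'M[k]_(s, t)) :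
  mulR (c *: A) B = c *: mulR A B.
Proof.
apply/matrixP => i j; rewrite !mulR_psi !mxE !coef2M mulr_sumr.
apply eq_bigr => l _; rewrite mulr_sumr; apply eq_bigr => l2 _.
by rewrite !coef_phiP cfZ mulrA.
Qed.

Lemma mulmono (k : fieldType) (s t : nat) a0 b0 (A : 'M[k]_(s, t)) a b :
  (a < s)%N -> (b < t)%N ->
  cf (mulR (monoR k s t a0 b0) A) a b =
  if (a0 <= a)%N && (b0 <= b)%N then cf A (a - a0) (b - b0) else 0.
Proof.
move=> ha hb; rewrite mulR_psi cf_psi // coef2M.
transitivity (\sum_(l < a.+1) (if (l : nat) == a0 then
   \sum_(l2 < b.+1) (if (l2 : nat) == b0 then cf A (a - l)%N (b - l2)%N else 0) else 0)).
  apply eq_bigr => l _.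
  have hl : (l < s)%N by apply: leq_ltn_trans ha; rewrite -ltnS.
  case: eqP => hl0.
    apply eq_bigr => l2 _.
    have hl2 : (l2 < t)%N by apply: leq_ltn_trans hb; rewrite -ltnS.
    by rewrite !coef_phiP cf_mono // hl0 eqxx /=; case: eqP; rewrite ?mul1r ?mul0r.
  rewrite big1 // => l2 _.
  have hl2 : (l2 < t)%N by apply: leq_ltn_trans hb; rewrite -ltnS.
  by rewrite !coef_phiP cf_mono //; move/eqP/negbTE: hl0 => ->; rewrite mul0r.
rewrite (sum_delta _ _ (fun l : nat => \sum_(l2 < b.+1)
   (if (l2 : nat) == b0 then cf A (a - l)%N (b - l2)%N else 0))) /=.
rewrite (sum_delta _ _ (fun l2 : nat => cf A (a - a0)%N (b - l2)%N)) /= !ltnS.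
by case: (a0 <= a)%N.
Qed.



Definition RR (k : fieldType) (s t : nat) : Type := 'M[k]_(s, t).
HB.instance Definition _ (k : fieldType) (s t : nat) := GRing.Lmodule.on (RR k s t).
HB.instance Definition _ (k : fieldType) (s t : nat) :=
  GRing.Zmodule_isComPzRing.Build (RR k s t)
    (@mulRA k s t) (@mulRC k s t) (@mul1R k s t) (@mulRDl k s t).

Lemma mulRE (k : fieldType) (s t : nat) (A B : 'M[k]_(s, t)) :
  mulR A B = (A : RR k s t) * (B : RR k s t).
Proof. by []. Qed.

Lemma powRE (k : fieldType) (s t : nat) (A : 'M[k]_(s, t)) n :
  powR A n = (A : RR k s t) ^+ n.
Proof. by elim: n => [|n IH] //=; rewrite exprS -IH. Qed.

Lemma scaleRl (k : fieldType) (s t : nat) (c : k) (A B : RR k s t) :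
  (c *: A) * B = c *: (A * B).
Proof. exact: mulRZ. Qed.

Lemma scaleRr (k : fieldType) (s t : nat) (c : k) (A B : RR k s t) :
  A * (c *: B) = c *: (A * B).
Proof. by rewrite mulrC scaleRl mulrC. Qed.



Lemma cf0 (k : fieldType) (s t : nat) a b : cf (0 : 'M[k]_(s, t)) a b = 0.
Proof. by rewrite /cf; case: (insub a) => // i; case: (insub b) => // j; rewrite mxE. Qed.

Lemma cf_zero (k : fieldType) (s t : nat) (A : 'M[k]_(s, t)) :
  (forall a b, (a < s)%N -> (b < t)%N -> cf A a b = 0) -> A = 0.
Proof. by move=> h; apply/matrixP => i j; rewrite mxE -cfE h. Qed.

Lemma cf_x (k : fieldType) (s t : nat) (A : RR k s t) a b :
  (a < s)%N -> (b < t)%N ->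
  cf ((xR k s t : RR k s t) * A) a b = if (1 <= a)%N then cf A (a - 1) b else 0.
Proof. by move=> ha hb; rewrite -mulRE mulmono // subn0 andbT. Qed.

Lemma cf_y (k : fieldType) (s t : nat) (A : RR k s t) a b :
  (a < s)%N -> (b < t)%N ->
  cf ((yR k s t : RR k s t) * A) a b = if (1 <= b)%N then cf A a (b - 1) else 0.
Proof. by move=> ha hb; rewrite -mulRE mulmono // subn0. Qed.

Lemma cf_theta (k : fieldType) (s t : nat) (A : RR k s t) a b :
  (a < s)%N -> (b < t)%N ->
  cf ((thetaR k s t : RR k s t) * A) a b =
  (if (1 <= a)%N then cf A (a - 1) b else 0) + (if (1 <= b)%N then cf A a (b - 1) else 0).
Proof.
move=> ha hb; rewrite /thetaR.
have -> : ((xR k s t + yR k s t : 'M_(s,t)) : RR k s t) = (xR k s t : RR k s t) + yR k s t by [].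
by rewrite mulrDl cfD cf_x // cf_y.
Qed.

Lemma cf_xn (k : fieldType) (s t : nat) (A : RR k s t) n a b :
  (a < s)%N -> (b < t)%N ->
  cf ((xR k s t : RR k s t) ^+ n * A) a b = if (n <= a)%N then cf A (a - n) b else 0.
Proof.
elim: n a => [|n IH] a ha hb; first by rewrite expr0 mul1r subn0.
rewrite exprS -mulrA cf_x //; case: a ha => [|a] ha //=.
rewrite subn1 /= IH //; last by apply: ltnW.
Qed.

Definition homC (k : fieldType) (s t : nat) (d : nat) (A : 'M[k]_(s, t)) :=
  forall a b, cf A a b != 0 -> (a + b)%N = d.

Lemma homog_cf (k : fieldType) (s t : nat) d (A : 'M[k]_(s, t)) : homogR d A -> homC d A.
Proof.
move=> h a b; case: (boolP ((a < s) && (b < t))%N) => [/andP [ha hb]|hn]; last by rewrite cf_out ?eqxx.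
by rewrite /cf (insubO ha) (insubO hb) => /h.
Qed.

Lemma homC_theta (k : fieldType) (s t : nat) d (A : RR k s t) :
  homC d A -> homC d.+1 ((thetaR k s t : RR k s t) * A).
Proof.
move=> h a b; case: (boolP ((a < s) && (b < t))%N) => [/andP [ha hb]|hn]; last by rewrite cf_out ?eqxx.
rewrite cf_theta //; case: a ha => [|a] ha; case: b hb => [|b] hb /=;
  rewrite ?subn1 /= ?addr0 ?add0r ?eqxx //.
- by move/h => <-.
- by move/h => <-; rewrite !addn0.
- case: (eqVneq (cf A a b.+1) 0) => [->|/h e _]; last by rewrite -e addSn.
  by rewrite add0r => /h <-; rewrite addnS.
Qed.

Lemma homC_thetan (k : fieldType) (s t : nat) m (A : RR k s t) e :
  homC m A -> homC (m + e) ((thetaR k s t : RR k s t) ^+ e * A).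
Proof.
move=> h; elim: e => [|e IH]; first by rewrite expr0 mul1r addn0.
by rewrite exprS -mulrA addnS; apply: homC_theta.
Qed.



Lemma keyz (k : fieldType) (s t : nat) (z : RR k s t) d :
  (1 <= t)%N -> (t - 1 <= d)%N -> z != 0 -> homC d z ->
  (thetaR k s t : RR k s t) * z = 0 -> cf z (d - (t - 1)) (t - 1) != 0.
Proof.
move=> ht htd hz hh hth; apply: contra hz => /eqP h0.
have H : forall a, cf z a (d - a) = 0.
  elim/ltn_ind => a IH.
  case: (ltngtP a (d - (t - 1))) => c.
  - by apply: cf_out; rewrite negb_and; apply/orP; right; rewrite -leqNgt; lia.
  - case: (ltnP a s) => hs; last by apply: cf_out; rewrite negb_and -leqNgt hs.
    case: (leqP a d) => had; last first.
      by apply/eqP; apply: contraT => /hh; lia.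
    case: a IH c hs had => [|a] IH c hs had; first by lia.
    have hdt : (d - a < t)%N by lia.
    have := cf_theta z (a := a.+1) hs hdt.
    rewrite hth cf0 /= subn1 /= IH // add0r.
    have -> : (1 <= d - a)%N by lia.
    by rewrite (_ : (d - a - 1 = d - a.+1)%N) //; lia.
  - by rewrite c (_ : (d - (d - (t - 1)) = t - 1)%N) //; lia.
apply/eqP; apply: cf_zero => a b _ _.
case: (eqVneq (cf z a b) 0) => // /hh e.
by move: (H a); rewrite (_ : (d - a = b)%N) //; lia.
Qed.

Lemma L1 (k : fieldType) (s t : nat) (X w : RR k s t) n (c : nat -> k) :
  X ^+ n * w != 0 -> (forall j, (n < j)%N -> X ^+ j * w = 0) ->
  \sum_(i < n.+1) c i *: (X ^+ i * w) = 0 -> forall i, (i <= n)%N -> c i = 0.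
Proof.
move=> hn hj hs; elim/ltn_ind => i IH hi.
have : X ^+ (n - i) * (\sum_(i < n.+1) c i *: (X ^+ i * w)) = 0 by rewrite hs mulr0.
rewrite mulr_sumr.
rewrite (eq_bigr (fun i' : 'I_n.+1 => if (i' : nat) == i then c i *: (X ^+ n * w) else 0)).
  rewrite (sum_delta _ _ (fun _ => c i *: (X ^+ n * w))) ltnS hi => /eqP.
  by rewrite scaler_eq0 (negbTE hn) orbF => /eqP.
move=> i' _; rewrite scaleRr mulrA -exprD; case: (ltngtP i' i) => h.
- by rewrite IH ?scale0r //; lia.
- by rewrite hj ?scaler0 //; lia.
- by rewrite h ?eqxx subnK.
Qed.

Lemma L2 (k : fieldType) (s t : nat) (T K X : RR k s t) e n (c : nat -> nat -> k) :
  X ^+ n * (T ^+ e * K) != 0 -> (forall j, (n < j)%N -> X ^+ j * (T ^+ e * K) = 0) ->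
  (forall j, (e < j)%N -> T ^+ j * K = 0) ->
  \sum_(i < n.+1) \sum_(j < e.+1) c i j *: (T ^+ j * K * X ^+ i) = 0 ->
  forall j, (j <= e)%N -> forall i, (i <= n)%N -> c i j = 0.
Proof.
move=> hn hj hT hs; elim/ltn_ind => j IH hje.
have : T ^+ (e - j) * (\sum_(i < n.+1) \sum_(j < e.+1) c i j *: (T ^+ j * K * X ^+ i)) = 0.
  by rewrite hs mulr0.
rewrite mulr_sumr.
rewrite (eq_bigr (fun i : 'I_n.+1 => (fun i => c i j) i *: (X ^+ i * (T ^+ e * K)))).
  by move/(@L1 _ _ _ _ _ _ (fun i => c i j) hn hj) => H i0 hi0; exact: H.
move=> i _; rewrite mulr_sumr.
rewrite (eq_bigr (fun j' : 'I_e.+1 => if (j' : nat) == j then c i j *: (X ^+ i * (T ^+ e * K)) else 0)).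
  by rewrite (sum_delta _ _ (fun _ => _)) ltnS hje.
move=> j' _; rewrite scaleRr !mulrA -exprD; case: (ltngtP j' j) => h.
- by rewrite IH ?scale0r //; [lia | have := ltn_ord i; lia].
- by rewrite hT ?mul0r ?scaler0 //; lia.
- by rewrite h subnK // [in LHS]mulrC mulrA.
Qed.

Lemma TPE (k : fieldType) (s t : nat) (q : {poly k}) (kappa : 'M[k]_(s, t)) i e :
  (forall j, (e < j)%N -> (thetaR k s t : RR k s t) ^+ j * kappa = 0) ->
  thetaPolyElt q kappa i =
  \sum_(j < e.+1) q`_j *: ((thetaR k s t : RR k s t) ^+ j * kappa * (xR k s t : RR k s t) ^+ i).
Proof.
move=> hT; rewrite /thetaPolyElt.
pose F := fun j : nat => q`_j *: ((thetaR k s t : RR k s t) ^+ j * kappa * (xR k s t : RR k s t) ^+ i).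
rewrite (eq_bigr (fun j : 'I_(size q) => F j)); last by move=> j _; rewrite !mulRE !powRE.
rewrite -(@sum_trunc _ (size q) (maxn (size q) e.+1) F) ?leq_maxl //; last first.
  by move=> j hj; rewrite /F nth_default ?scale0r.
rewrite (@sum_trunc _ e.+1) ?leq_maxr // => j hj.
by rewrite /F hT ?mul0r ?scaler0.
Qed.

Theorem lemma2p14 (k : closedFieldType) (s t : nat) (kappa : 'M[k]_(s, t)) (m d : nat) :
  (1 <= s)%N -> (s <= t)%N ->
  kappa != 0 -> homogR m kappa ->
  socle_degree kappa d ->
  (t - 1 <= d)%N -> (d < s + t - 2)%N ->
  direct_theta_sum kappa (s + t - 2 - d).
Proof.
move=> hs hst hk hm [m' [e [hm' hne hz' ->]]] htd hd p hsum i hi.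
set T := (thetaR k s t : RR k s t).
set X := (xR k s t : RR k s t).
set K := (kappa : RR k s t).
have hT : forall j, (e < j)%N -> T ^+ j * K = 0.
  by move=> j hj; rewrite -powRE -mulRE hz'.
have hz : T ^+ e * K != 0 by rewrite -powRE -mulRE.
have hthz : T * (T ^+ e * K) = 0 by rewrite mulrA -exprS hT.
have hh : homC (m' + e) (T ^+ e * K) by apply: homC_thetan; apply: homog_cf.
have ht : (1 <= t)%N by lia.
have key := keyz ht htd hz hh hthz.
set n := (s + t - 2 - (m' + e))%N.
have hxn : X ^+ n * (T ^+ e * K) != 0.
  apply: contra key => /eqP h0.
  have hs1 : (s - 1 < s)%N by lia.
  have ht1 : (t - 1 < t)%N by lia.
  have := cf_xn (T ^+ e * K) n hs1 ht1; rewrite h0 cf0.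
  have -> : (n <= s - 1)%N by rewrite /n; lia.
  have -> : (s - 1 - n = m' + e - (t - 1))%N by rewrite /n; lia.
  by move=> ->.
have hxj : forall j, (n < j)%N -> X ^+ j * (T ^+ e * K) = 0.
  move=> j hj; apply: cf_zero => a b ha hb; rewrite cf_xn //; case: ifP => // hja.
  by apply/eqP; apply: contraT => /hh; rewrite /n in hj; lia.
move: hsum.
rewrite (eq_bigr (fun i : 'I_n.+1 => \sum_(j < e.+1) (fun i j => (p i)`_j) i j *: (T ^+ j * K * X ^+ i))); last first.
  by move=> i0 _; rewrite (@TPE _ _ _ _ _ _ _ hT).
move/(@L2 _ _ _ _ _ _ _ _ (fun i j => (p i)`_j) hxn hxj hT) => hc.
rewrite (@TPE _ _ _ _ _ _ _ hT); rewrite big1 // => j _.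
by rewrite hc ?scale0r //; have := ltn_ord j; lia.
Qed.
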